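(* Let $\alpha\ge 0$, let $\mathbf{G}\subset\mathbb{R}^2$ be a ground-truth box (a closed oriented rectangle of positive area not containing the origin) and let $\mathbf{P}\subset\mathbb{R}^2$ be an arbitrary prediction box (a closed oriented rectangle). Then $0 \le \mathsf{EC\text{-}IoU}(\mathbf{P},\mathbf{G}) \le 1$.
   Context: $\rho(x,y)=\sqrt{x^2+y^2}$ is the distance to the origin (the ego position). For a ground-truth box $\mathbf{G}$ with center $(x_{\mathbf{G}},y_{\mathbf{G}})$, define the weight $\omega_{\mathbf{G}}(x,y) = \left[\rho(x_{\mathbf{G}},y_{\mathbf{G}})/\rho(x,y)\right]^{\alpha}$ for $(x,y)\in\mathbf{G}$. For a region $\mathbf{D}\subseteq\mathbf{G}$ let $\mathsf{Weighted\text{-}Area}_{\mathbf{G}}(\mathbf{D}) = \iint_{\mathbf{D}} \omega_{\mathbf{G}}(x,y)\,dA$, and for any region $\mathbf{D}$ let $\mathsf{Area}(\mathbf{D}) = \iint_{\mathbf{D}} 1\,dA$. The Ego-Centric IoU is $$\mathsf{EC\text{-}IoU}(\mathbf{P},\mathbf{G}) = \frac{\mathsf{Weighted\text{-}Area}_{\mathbf{G}}(\mathbf{P}\cap\mathbf{G})}{\mathsf{Weighted\text{-}Area}_{\mathbf{G}}(\mathbf{G}) + \mathsf{Area}(\mathbf{P}) - \mathsf{Area}(\mathbf{P}\cap\mathbf{G})}.$$ *)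

(* Defs.v *)
From HB Require Import structures.
From mathcomp Require Import all_boot all_order all_algebra.
From mathcomp Require Import all_classical all_reals all_analysis.
Set Implicit Arguments. Unset Strict Implicit. Unset Printing Implicit Defensive.
Import Order.TTheory GRing.Theory Num.Theory.
Local Open Scope classical_set_scope.
Local Open Scope ring_scope.

Section ECIoU.
Variable R : realType.

Definition leb2 := (@lebesgue_measure R \x @lebesgue_measure R)%E.

Definition rho (p : R * R) : R := Num.sqrt (p.1 ^+ 2 + p.2 ^+ 2).

(* closed oriented rectangle with center (cx,cy), length l, width w
   (side lengths along the rotated axes) and heading angle th *)
Definition obox (cx cy l w th : R) : set (R * R) :=
  [set p | `|(p.1 - cx) * cos th + (p.2 - cy) * sin th| <= l / 2 /\
           `| - (p.1 - cx) * sin th + (p.2 - cy) * cos th| <= w / 2].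

Definition ec_weight (alpha cx cy : R) (p : R * R) : R :=
  powR (rho (cx, cy) / rho p) alpha.

Definition weighted_area (alpha cx cy : R) (D : set (R * R)) : R :=
  Rintegral leb2 D (ec_weight alpha cx cy).

Definition area (D : set (R * R)) : R := fine (leb2 D).

(* EC-IoU(P, G) where G has center (cx,cy) *)
Definition ec_iou (alpha cx cy : R) (P G : set (R * R)) : R :=
  weighted_area alpha cx cy (P `&` G) /
  (weighted_area alpha cx cy G + area P - area (P `&` G)).

End ECIoU.

(* Main.v *)
Require Import Defs.
From HB Require Import structures.
From mathcomp Require Import all_boot all_order all_algebra.
From mathcomp Require Import all_classical all_reals all_analysis.
From mathcomp Require Import ring lra.
Import Order.TTheory GRing.Theory Num.Theory.
Local Open Scope classical_set_scope.
Local Open Scope ring_scope.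

Import measurable_realfun.
Section S.
Variable R : realType.
Implicit Types (cx cy l w th : R).



Lemma mlin (a b c e : R) :
  measurable_fun [set: R * R] (fun p : R * R => `|(p.1 - a) * b + (p.2 - c) * e|).
Proof.
apply: measurableT_comp; first exact: normr_measurable.
apply: measurable_funD.
  apply: measurable_funM; last exact: measurable_cst.
  apply: measurable_funB; last exact: measurable_cst.
  exact: measurable_fst.
apply: measurable_funM; last exact: measurable_cst.
apply: measurable_funB; last exact: measurable_cst.
exact: measurable_snd.
Qed.

Lemma obox_meas cx cy l w th : measurable (obox cx cy l w th).
Proof.
have h1 := mlin cx (cos th) cy (sin th) measurableT _ (measurable_itv `]-oo, l/2]).
have h2 := mlin cx (- sin th) cy (cos th) measurableT _ (measurable_itv `]-oo, w/2]).
rewrite !setTI in h1 h2.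
have -> : obox cx cy l w th = 
  ((fun p : R * R => `|(p.1 - cx) * cos th + (p.2 - cy) * sin th|) @^-1` `]-oo, l/2]) `&`
  ((fun p : R * R => `|(p.1 - cx) * - sin th + (p.2 - cy) * cos th|) @^-1` `]-oo, w/2]).
  by apply/seteqP; split => p; rewrite /obox /= !in_itv /= mulrN mulNr.
exact: measurableI.
Qed.

Lemma test cx cy l w th : (leb2 (obox cx cy l w th) <= leb2 (obox cx cy l w th))%E.
Proof. apply: le_measure; rewrite ?inE; [exact: obox_meas|exact: obox_meas|done]. Qed.

Lemma inv_meas : measurable_fun [set: R] (@GRing.inv R).
Proof.
have -> : [set: R] = [set x | x != 0] `|` [set 0].
  by apply/seteqP; split => x //= _; case: (eqVneq x 0); [right|left].
have h1 := measurable_realfun.open_measurable (@open_neq R 0).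
have h2 := measurable_set1 (0:R).
apply/(measurable_funU _ h1 h2).
split; last exact: measurable_fun_set1.
apply: open_continuous_measurable_fun; first exact: open_neq.
by move=> x; rewrite inE => /inv_continuous.
Qed.

Lemma rho_meas : measurable_fun [set: R * R] (@rho R).
Proof.
apply: (measurableT_comp (f:=@Num.sqrt R) (g:=fun p : R*R => p.1^+2 + p.2^+2)).
  exact: continuous_measurable_fun (@sqrt_continuous R).
apply: measurable_funD; apply: measurable_funX; [exact: measurable_fst|exact: measurable_snd].
Qed.

Lemma weight_meas alpha cx cy : measurable_fun [set: R * R] (ec_weight alpha cx cy).
Proof.
rewrite /ec_weight.
apply: (measurableT_comp (f:=(@powR R)^~ alpha) (g:=fun p : R*R => rho (cx, cy) / rho p)).
  exact: measurable_powR.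
apply: measurable_funM; first exact: measurable_cst.
apply: (measurableT_comp (f:=@GRing.inv R) (g:=@rho R)); first exact: inv_meas.
exact: rho_meas.
Qed.


Lemma rot_id (a b c s : R) : c^+2 + s^+2 = 1 ->
  a^+2 + b^+2 = (a*c + b*s)^+2 + (-a*s + b*c)^+2.
Proof.
move=> h; have -> : a^+2 + b^+2 = (a^+2 + b^+2) * (c^+2 + s^+2) by rewrite h mulr1.
ring.
Qed.

Lemma rho_ge1 (p : R * R) th : `|p.1 * cos th + p.2 * sin th| <= rho p.
Proof.
rewrite /rho (@rot_id p.1 p.2 _ _ (cos2Dsin2 th)) -sqrtr_sqr; apply: ler_wsqrtr.
by rewrite lerDl sqr_ge0.
Qed.

Lemma rho_ge2 (p : R * R) th : `|- p.1 * sin th + p.2 * cos th| <= rho p.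
Proof.
rewrite /rho (@rot_id p.1 p.2 _ _ (cos2Dsin2 th)) -sqrtr_sqr; apply: ler_wsqrtr.
by rewrite lerDr sqr_ge0.
Qed.

Lemma dist_lb cx cy l w th : ~ obox cx cy l w th (0, 0) ->
  exists2 d : R, 0 < d & forall p, obox cx cy l w th p -> d <= rho p.
Proof.
rewrite /obox /= => h0.
set u0 := (0 - cx) * cos th + (0 - cy) * sin th in h0.
set v0 := - (0 - cx) * sin th + (0 - cy) * cos th in h0.
have [hu|hu] := leP `|u0| (l/2).
- have hv : w / 2 < `|v0|.
    by rewrite ltNge; apply/negP => hv; apply: h0.
  exists (`|v0| - w/2); first by rewrite subr_gt0.
  move=> p [_ hp].
  set v := - (p.1 - cx) * sin th + (p.2 - cy) * cos th in hp.
  have e : v0 - v = - (- p.1 * sin th + p.2 * cos th) by rewrite /v0 /v; ring.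
  have h1 := rho_ge2 p th.
  have h2 : `|v0| <= `|v0 - v| + `|v|.
    by rewrite -[X in `|X| <= _](subrK v) ler_normD.
  rewrite e normrN in h2.
  lra.
- exists (`|u0| - l/2); first by rewrite subr_gt0.
  move=> p [hp _].
  set u := (p.1 - cx) * cos th + (p.2 - cy) * sin th in hp.
  have e : u0 - u = - (p.1 * cos th + p.2 * sin th) by rewrite /u0 /u; ring.
  have h1 := rho_ge1 p th.
  have h2 : `|u0| <= `|u0 - u| + `|u|.
    by rewrite -[X in `|X| <= _](subrK u) ler_normD.
  rewrite e normrN in h2.
  lra.
Qed.


Lemma obox_sub cx cy l w th : 0 <= l -> 0 <= w ->
  obox cx cy l w th `<=`
  `[cx - (l/2 + w/2), cx + (l/2 + w/2)] `*` `[cy - (l/2 + w/2), cy + (l/2 + w/2)].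
Proof.
move=> hl hw p [hu hv].
set u := (p.1 - cx) * cos th + (p.2 - cy) * sin th in hu.
set v := - (p.1 - cx) * sin th + (p.2 - cy) * cos th in hv.
have hc := cos_max th. have hs := sin_max th.
have ec := cos2Dsin2 th.
have e1 : p.1 - cx = u * cos th - v * sin th.
  transitivity ((p.1 - cx) * (cos th ^+2 + sin th ^+ 2)); first by rewrite ec mulr1.
  rewrite /u /v; ring.
have e2 : p.2 - cy = u * sin th + v * cos th.
  transitivity ((p.2 - cy) * (cos th ^+2 + sin th ^+ 2)); first by rewrite ec mulr1.
  rewrite /u /v; ring.
have n1 : `|u| * `|cos th| <= l / 2.
  by rewrite -[l / 2]mulr1; apply: ler_pM => //; exact: normr_ge0.
have n2 : `|u| * `|sin th| <= l / 2.
  by rewrite -[l / 2]mulr1; apply: ler_pM => //; exact: normr_ge0.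
have n3 : `|v| * `|cos th| <= w / 2.
  by rewrite -[w / 2]mulr1; apply: ler_pM => //; exact: normr_ge0.
have n4 : `|v| * `|sin th| <= w / 2.
  by rewrite -[w / 2]mulr1; apply: ler_pM => //; exact: normr_ge0.
split => /=; rewrite in_itv /= -ler_distl.
- rewrite e1; apply: (le_trans (ler_normB _ _)); rewrite !normrM; lra.
- rewrite e2; apply: (le_trans (ler_normD _ _)); rewrite !normrM; lra.
Qed.

Lemma obox_fin cx cy l w th : 0 <= l -> 0 <= w ->
  (leb2 (obox cx cy l w th) < +oo)%E.
Proof.
move=> hl hw.
have hs := obox_sub cx cy l w th hl hw.
apply: (@le_lt_trans _ _ (leb2 (`[cx - (l/2 + w/2), cx + (l/2 + w/2)] `*` `[cy - (l/2 + w/2), cy + (l/2 + w/2)]))).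
  apply: le_measure; last exact: hs.
  - by rewrite inE; exact: obox_meas.
  - by rewrite inE; apply: measurableX; exact: measurable_itv.
rewrite /leb2 product_measure1E; try exact: measurable_itv.
set M := l / 2 + w / 2.
change ((@lebesgue_measure R `[(cx - M)%R, (cx + M)%R] * @lebesgue_measure R `[(cy - M)%R, (cy + M)%R]) < +oo)%E.
rewrite !lebesgue_measure_itv /=.
by case: ifPn => _; case: ifPn => _; rewrite -?EFinD ?mul0e ?mule0 -?EFinM ?ltry.
Qed.

End S.

Theorem lemma2 (R : realType) (alpha : R)
  (gx gy gl gw gth : R) (px py pl pw pth : R) :
  0 <= alpha ->
  0 < gl -> 0 < gw ->
  ~ obox gx gy gl gw gth (0, 0) ->
  0 <= pl -> 0 <= pw ->
  0 <= ec_iou alpha gx gy (obox px py pl pw pth) (obox gx gy gl gw gth) <= 1.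
Proof.
move=> ha hgl hgw h0 hpl hpw.
have [d d0 hd] := @dist_lb R _ _ _ _ _ h0.
have mP := @obox_meas R px py pl pw pth.
have mG := @obox_meas R gx gy gl gw gth.
have mPG := measurableI _ _ mP mG.
have finP := @obox_fin R px py pl pw pth hpl hpw.
have finG := @obox_fin R gx gy gl gw gth (ltW hgl) (ltW hgw).
set P := obox px py pl pw pth in mP mPG finP *.
set G := obox gx gy gl gw gth in hd mG mPG finG *.
set f := ec_weight alpha gx gy.
set K := powR (rho (gx, gy) / d) alpha.
have w0 p : 0 <= f p by exact: powR_ge0.
have wb p : G p -> f p <= K.
  move=> /hd hp; rewrite /f /ec_weight /K.
  have rp : 0 < rho p by exact: lt_le_trans hp.
  apply: ge0_ler_powR => //; rewrite ?nnegrE.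
  - by apply: divr_ge0; exact: sqrtr_ge0.
  - by apply: divr_ge0; [exact: sqrtr_ge0|exact: ltW].
  apply: ler_wpM2l; first exact: sqrtr_ge0.
  by rewrite lef_pV2 ?posrE.
have mf : measurable_fun [set: R * R] (EFin \o f).
  by apply/measurable_EFinP; exact: weight_meas.
set IG := (\int[leb2 (R:=R)]_(x in G) (f x)%:E)%E.
set IPG := (\int[leb2 (R:=R)]_(x in P `&` G) (f x)%:E)%E.
have IPG0 : (0 <= IPG)%E by apply: integral_ge0 => x _; rewrite lee_fin.
have IPGle : (IPG <= IG)%E.
  apply: ge0_subset_integral.
  - exact: mPG.
  - exact: mG.
  - exact: (measurable_funTS mf).
  - by move=> x _; rewrite lee_fin.
  - by move=> x [].
have IGfin : (IG < +oo)%E.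
  apply: (@le_lt_trans _ _ (\int[leb2 (R:=R)]_(x in G) (cst K%:E x))%E).
    apply: ge0_le_integral.
    - exact: mG.
    - by move=> x _; rewrite lee_fin.
    - exact: (measurable_funTS mf).
    - exact: measurable_cst.
    - by move=> x /wb; rewrite lee_fin.
  rewrite integral_cst //; apply: lte_mul_pinfty => //.
  by rewrite lee_fin; exact: powR_ge0.
have hA : 0 <= fine IPG by exact: fine_ge0.
have hAB : fine IPG <= fine IG.
  have fIG : IG \is a fin_num by rewrite ge0_fin_numE // (le_trans IPG0 IPGle).
  have fIPG : IPG \is a fin_num by rewrite ge0_fin_numE // (le_lt_trans IPGle IGfin).
  exact: fine_le fIPG fIG IPGle.
have hc : 0 <= fine (leb2 (P `&` G)) by exact: fine_ge0.
have hca : fine (leb2 (P `&` G)) <= fine (leb2 P).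
  have le1 : (leb2 (P `&` G) <= leb2 P)%E.
    by apply: le_measure; rewrite ?inE // => x [].
  have f1 : leb2 P \is a fin_num by rewrite ge0_fin_numE.
  have f2 : leb2 (P `&` G) \is a fin_num by rewrite ge0_fin_numE // (le_lt_trans le1 finP).
  exact: fine_le f2 f1 le1.
rewrite /ec_iou /weighted_area /Rintegral /area -/f -/IPG -/IG.
set A := fine IPG in hA hAB *.
set B := fine IG in hAB *.
set a := fine (leb2 P) in hca *.
set c := fine (leb2 (P `&` G)) in hc hca *.
have hden : 0 <= B + a - c by lra.
apply/andP; split; first exact: divr_ge0.
have [->|nz] := eqVneq (B + a - c) 0; first by rewrite invr0 mulr0.
have dpos : 0 < B + a - c by rewrite lt_neqAle eq_sym nz.
by rewrite ler_pdivrMr // mul1r; lra.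
Qed.
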